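(* For all $n\ge 0$, the distribution of the quadruple $(\operatorname{asc},\operatorname{des},\operatorname{MNA},\operatorname{MND})$ on $S_n(231,312)$ equals the distribution of $(\operatorname{des},\operatorname{asc},\operatorname{MND},\operatorname{MNA})$ on $S_n(213,231)$, i.e. $$\sum_{\pi\in S_n(231,312)} t_1^{\operatorname{asc}(\pi)}t_2^{\operatorname{des}(\pi)}t_3^{\operatorname{MNA}(\pi)}t_4^{\operatorname{MND}(\pi)}=\sum_{\sigma\in S_n(213,231)} t_1^{\operatorname{des}(\sigma)}t_2^{\operatorname{asc}(\sigma)}t_3^{\operatorname{MND}(\sigma)}t_4^{\operatorname{MNA}(\sigma)}.$$
   Context: For $n\ge 0$, $S_n$ denotes the set of permutations $\pi=\pi_1\cdots\pi_n$ of $[n]=\{1,\dots,n\}$. $\pi$ avoids a pattern $\tau\in S_k$ if no subsequence $\pi_{i_1}\cdots\pi_{i_k}$ ($i_1<\dots<i_k$) satisfies $\pi_{i_a}<\pi_{i_b}\iff\tau_a<\tau_b$; $S_n(\tau,\rho)$ is the set of permutations in $S_n$ avoiding both $\tau$ and $\rho$. $\operatorname{asc}(\pi)$ (resp. $\operatorname{des}(\pi)$) is the number of $i\in[n-1]$ with $\pi_i<\pi_{i+1}$ (resp. $\pi_i>\pi_{i+1}$). $\operatorname{MNA}(\pi)$ is the maximum size of a set $I\subseteq[n-1]$ such that $\pi_i<\pi_{i+1}$ for all $i\in I$ and $|i-j|\ge 2$ for distinct $i,j\in I$; $\operatorname{MND}(\pi)$ is defined analogously with $\pi_i>\pi_{i+1}$.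 *)

(* Defs.v *)
(* Permutations of [n] are represented as 'S_n = {perm 'I_n},
   with positions and values shifted to 0-based (order-preserving, so pattern
   containment, ascents, descents are unchanged). *)
From mathcomp Require Import all_boot all_order all_fingroup.
Set Implicit Arguments. Unset Strict Implicit. Unset Printing Implicit Defensive.

Definition word n (p : 'S_n) : seq nat := [seq val (p i) | i <- enum 'I_n].

(* pi contains the pattern tau (given in one-line notation, any consecutive
   values; only relative order matters): there are positions
   i_1 < ... < i_k with pi_{i_a} < pi_{i_b} <-> tau_a < tau_b *)
Definition contains n (p : 'S_n) (tau : seq nat) : bool :=
  [exists f : {ffun 'I_(size tau) -> 'I_n},
     [forall a : 'I_(size tau), forall b : 'I_(size tau),
        ((a < b)%N ==> (f a < f b)%N) &&
        ((p (f a) < p (f b))%N == (nth 0 tau a < nth 0 tau b)%N)]].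

Definition avoids n (p : 'S_n) (tau : seq nat) : bool := ~~ contains p tau.

Definition is_asc n (p : 'S_n) (i : nat) : bool :=
  (i.+1 < n)%N && (nth 0 (word p) i < nth 0 (word p) i.+1)%N.
Definition is_des n (p : 'S_n) (i : nat) : bool :=
  (i.+1 < n)%N && (nth 0 (word p) i > nth 0 (word p) i.+1)%N.

Definition asc n (p : 'S_n) : nat := count (is_asc p) (iota 0 n).
Definition des n (p : 'S_n) : nat := count (is_des p) (iota 0 n).

Definition nonadj_set n (P : nat -> bool) (I : {set 'I_n}) : bool :=
  [forall i in I, P i] &&
  [forall i in I, forall j in I, (i != j) ==> ((i.+2 <= j)%N || (j.+2 <= i)%N)].

Definition MNA n (p : 'S_n) : nat :=
  \max_(I : {set 'I_n} | nonadj_set (is_asc p) I) #|I|.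
Definition MND n (p : 'S_n) : nat :=
  \max_(I : {set 'I_n} | nonadj_set (is_des p) I) #|I|.

(* Main.v *)
Require Import Defs.
From mathcomp Require Import all_boot all_order all_fingroup.
From mathcomp Require Import zify.
Set Implicit Arguments. Unset Strict Implicit. Unset Printing Implicit Defensive.

Definition v n (p : 'S_n) k := nth 0 (word p) k.

Lemma vE n (p : 'S_n) (i : 'I_n) : v p i = p i.
Proof. rewrite /v /word (nth_map i) ?size_enum_ord //; by rewrite nth_ord_enum. Qed.

Lemma vO n (p : 'S_n) k (Hk : k < n) : v p k = p (Ordinal Hk).
Proof. exact: (vE p (Ordinal Hk)). Qed.

Lemma vlt n (p : 'S_n) k : k < n -> v p k < n.
Proof. by move=> Hk; rewrite (vO p Hk). Qed.

Lemma vinj n (p : 'S_n) a b : a < n -> b < n -> v p a = v p b -> a = b.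
Proof.
move=> Ha Hb; rewrite (vO p Ha) (vO p Hb) => /val_inj /perm_inj [].
by [].
Qed.

Lemma card_iota n (P : pred nat) : #|[set i : 'I_n | P i]| = count P (iota 0 n).
Proof.
by rewrite -sum1dep_card -(big_mkord (fun i => P i) (fun _ => 1)) /index_iota subn0 sum1_count.
Qed.

Lemma count_ltm m N : count (fun k => k < m) (iota 0 N) = minn m N.
Proof.
elim: N => [|N IH]; first by rewrite minn0.
rewrite -addn1 iotaD count_cat IH /= add0n addn0; lia.
Qed.

Lemma card_below n (p : 'S_n) (i : 'I_n) : #|[set j : 'I_n | p j < p i]| = p i.
Proof.
have -> : [set j : 'I_n | p j < p i] = (p^-1)%g @: [set k : 'I_n | k < p i].
  apply/setP => j; rewrite inE; apply/idP/imsetP.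
    by move=> H; exists (p j); rewrite ?inE // permK.
  by move=> [k]; rewrite inE => Hk ->; rewrite permKV.
rewrite card_imset; last exact: perm_inj.
rewrite (card_iota n (fun k => k < p i)) count_ltm; apply/minn_idPl; exact: ltnW.
Qed.

Lemma perm_cmp n (p q : 'S_n) : (forall i j, (p i < p j) = (q i < q j)) -> p = q.
Proof.
move=> H; apply/permP => i; apply: val_inj => /=.
rewrite -(card_below p i) -(card_below q i); apply: eq_card => j; by rewrite !inE H.
Qed.


Lemma flip u w x y : u != w -> x != y -> (u < w) = (x < y) -> (w < u) = (y < x).
Proof. by case: (ltngtP u w); case: (ltngtP x y). Qed.

Lemma avoid_trip n (p : 'S_n) x y z : x != y -> x != z -> y != z ->
  avoids p [:: x; y; z] -> forall a b c, a < b -> b < c -> c < n ->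
  ~~ [&& (v p a < v p b) == (x < y), (v p a < v p c) == (x < z) & (v p b < v p c) == (y < z)].
Proof.
move=> xy xz yz /negP Hav a b c ab bc cn; apply/negP => /and3P [/eqP H1 /eqP H2 /eqP H3].
apply: Hav.
have bn : b < n by lia.
have an : a < n by lia.
have vab : v p a != v p b by apply/eqP => /vinj; lia.
have vac : v p a != v p c by apply/eqP => /vinj; lia.
have vbc : v p b != v p c by apply/eqP => /vinj; lia.
rewrite (vO p an) (vO p bn) (vO p cn) in H1 H2 H3 vab vac vbc.
apply/existsP; exists [ffun t : 'I_3 => if val t == 0 then Ordinal an else if val t == 1 then Ordinal bn else Ordinal cn].
apply/forallP => -[[|[|[|t]]] Ht] //; apply/forallP => -[[|[|[|s]]] Hs] //; rewrite !ffunE /=.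
all: rewrite ?ltnn ?H1 ?H2 ?H3 ?eqxx ?andbT //=.
all: try (apply/andP; split; [lia|]).
all: try (apply/eqP; apply: flip => //; lia).
all: lia.
Qed.

Lemma trip_avoid n (p : 'S_n) x y z :
  (forall a b c, a < b -> b < c -> c < n ->
  ~~ [&& (v p a < v p b) == (x < y), (v p a < v p c) == (x < z) & (v p b < v p c) == (y < z)]) ->
  avoids p [:: x; y; z].
Proof.
move=> H; apply/negP => /existsP [f /forallP Hf].
have H01 := Hf (@Ordinal 3 0 isT); move/forallP: H01 => H0.
have H1' := Hf (@Ordinal 3 1 isT); move/forallP: H1' => H1.
move: (H0 (@Ordinal 3 1 isT)) (H0 (@Ordinal 3 2 isT)) (H1 (@Ordinal 3 2 isT)) => /=.
move=> /andP [f01 /eqP E1] /andP [_ /eqP E2] /andP [f12 /eqP E3].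
have := H (f (@Ordinal 3 0 isT)) (f (@Ordinal 3 1 isT)) (f (@Ordinal 3 2 isT)) f01 f12 (ltn_ord _).
by rewrite !vE E1 E2 E3 !eqxx.
Qed.

Lemma vneq n (p : 'S_n) a b : a < n -> b < n -> a != b -> v p a != v p b.
Proof. by move=> an bn ab; apply/eqP => /vinj; move: ab => /eqP; lia. Qed.

Lemma av231 n (p : 'S_n) : avoids p [:: 2; 3; 1] -> forall a b c, a < b -> b < c -> c < n ->
  v p c < v p a -> v p a < v p b -> False.
Proof.
move=> H a b c ab bc cn h1 h2; move: (@avoid_trip n p 2 3 1 isT isT isT H a b c ab bc cn) => /negP; apply.
have e2 : (v p a < v p c) = false by apply/negbTE; rewrite -leqNgt; lia.
have e3 : (v p b < v p c) = false by apply/negbTE; rewrite -leqNgt; lia.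
by rewrite h2 e2 e3.
Qed.

Lemma av312 n (p : 'S_n) : avoids p [:: 3; 1; 2] -> forall a b c, a < b -> b < c -> c < n ->
  v p b < v p c -> v p c < v p a -> False.
Proof.
move=> H a b c ab bc cn h1 h2; move: (@avoid_trip n p 3 1 2 isT isT isT H a b c ab bc cn) => /negP; apply.
have e2 : (v p a < v p c) = false by apply/negbTE; rewrite -leqNgt; lia.
have e3 : (v p a < v p b) = false by apply/negbTE; rewrite -leqNgt; lia.
by rewrite h1 e2 e3.
Qed.

Lemma av213 n (p : 'S_n) : avoids p [:: 2; 1; 3] -> forall a b c, a < b -> b < c -> c < n ->
  v p b < v p a -> v p a < v p c -> False.
Proof.
move=> H a b c ab bc cn h1 h2; move: (@avoid_trip n p 2 1 3 isT isT isT H a b c ab bc cn) => /negP; apply.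
have e2 : (v p b < v p c) = true by lia.
have e3 : (v p a < v p b) = false by apply/negbTE; rewrite -leqNgt; lia.
by rewrite h2 e2 e3.
Qed.


Lemma mk231 n (p : 'S_n) : (forall a b c, a < b -> b < c -> c < n ->
  v p c < v p a -> v p a < v p b -> False) -> avoids p [:: 2; 3; 1].
Proof.
move=> H; apply: trip_avoid => a b c ab bc cn; apply/negP => /and3P [/eqP h1 /eqP h2 /eqP h3].
have an : a < n by lia.
have ac : a != c by lia.
have /eqP n1 := vneq p an cn ac.
have e1 : v p a < v p b by rewrite h1.
have e2 : v p c <= v p a by rewrite leqNgt h2.
apply: (H a b c) => //; lia.
Qed.

Lemma mk312 n (p : 'S_n) : (forall a b c, a < b -> b < c -> c < n ->
  v p b < v p c -> v p c < v p a -> False) -> avoids p [:: 3; 1; 2].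
Proof.
move=> H; apply: trip_avoid => a b c ab bc cn; apply/negP => /and3P [/eqP h1 /eqP h2 /eqP h3].
have an : a < n by lia.
have ac : a != c by lia.
have /eqP n1 := vneq p an cn ac.
have e1 : v p b < v p c by rewrite h3.
have e2 : v p c <= v p a by rewrite leqNgt h2.
apply: (H a b c) => //; lia.
Qed.

Lemma mk213 n (p : 'S_n) : (forall a b c, a < b -> b < c -> c < n ->
  v p b < v p a -> v p a < v p c -> False) -> avoids p [:: 2; 1; 3].
Proof.
move=> H; apply: trip_avoid => a b c ab bc cn; apply/negP => /and3P [/eqP h1 /eqP h2 /eqP h3].
have an : a < n by lia.
have bn : b < n by lia.
have ac : a != b by lia.
have /eqP n1 := vneq p an bn ac.
have e1 : v p a < v p c by rewrite h2.
have e2 : v p b <= v p a by rewrite leqNgt h1.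
apply: (H a b c) => //; lia.
Qed.


Definition rkf n (key : nat -> nat) (i : 'I_n) := #|[set j : 'I_n | key j < key i]|.

Lemma rkf_lt n (key : nat -> nat) (i : 'I_n) : rkf key i < n.
Proof.
rewrite /rkf -[X in _ < X]card_ord -cardsT; apply: proper_card; apply/properP; split.
  exact: subsetT.
by exists i; rewrite ?inE ?ltnn.
Qed.

Lemma rkf_mono n (key : nat -> nat) (i j : 'I_n) : key i < key j -> rkf key i < rkf key j.
Proof.
move=> h; apply: proper_card; apply/properP; split.
  by apply/subsetP => k; rewrite !inE => hk; apply: ltn_trans hk h.
by exists i; rewrite !inE ?ltnn.
Qed.

Lemma rkf_cmp n (key : nat -> nat) (Hk : forall i j : 'I_n, key i = key j -> i = j) (i j : 'I_n) :
  (rkf key i < rkf key j) = (key i < key j).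
Proof.
case: (ltngtP (key i) (key j)) => h.
- exact: rkf_mono.
- by apply/negbTE; rewrite -leqNgt ltnW // rkf_mono.
- by rewrite (Hk _ _ h) ltnn.
Qed.

Lemma rk_inj n (key : nat -> nat) (Hk : forall i j : 'I_n, key i = key j -> i = j) :
  injective (fun i : 'I_n => Ordinal (rkf_lt key i)).
Proof.
move=> i j /(congr1 val) /= e; apply: Hk.
case: (ltngtP (key i) (key j)) => // h.
- by have := rkf_mono h; rewrite e ltnn.
- by have := rkf_mono h; rewrite e ltnn.
Qed.

Definition rk n (key : nat -> nat) (Hk : forall i j : 'I_n, key i = key j -> i = j) : 'S_n := perm (rk_inj Hk).

Lemma v_rk n (key : nat -> nat) (Hk : forall i j : 'I_n, key i = key j -> i = j) a b :
  a < n -> b < n -> (v (rk Hk) a < v (rk Hk) b) = (key a < key b).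
Proof.
move=> an bn; rewrite (vO _ an) (vO _ bn) /rk !permE /=.
exact: (rkf_cmp Hk (Ordinal an) (Ordinal bn)).
Qed.

Lemma cmp_ext n (p : 'S_n) (key : nat -> nat) :
  (forall i j, i < n -> j < n -> key i = key j -> i = j) ->
  (forall i j, i < j -> j < n -> (v p i < v p j) = (key i < key j)) ->
  forall i j, i < n -> j < n -> (v p i < v p j) = (key i < key j).
Proof.
move=> Hk H i j iN jN; case: (ltngtP i j) => h.
- exact: H.
- have := H j i h iN; apply: flip.
  + by apply: vneq => //; lia.
  + by apply/eqP => /Hk; lia.
- by rewrite h !ltnn.
Qed.


Definition nD n (D : {set 'I_n}) k := [exists x in D, val x == k].

Lemma nDE n (D : {set 'I_n}) (x : 'I_n) : nD D x = (x \in D).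
Proof.
apply/existsP/idP => [[y /andP [yD /eqP /val_inj <-]] // | xD].
by exists x; rewrite xD eqxx.
Qed.

Lemma nD_set n (P : pred nat) k : nD [set i : 'I_n | P i] k = (k < n) && P k.
Proof.
apply/existsP/idP => [[y /andP [yD /eqP <-]] | /andP [kn Pk]].
  by rewrite inE in yD; rewrite yD ltn_ord.
by exists (Ordinal kn); rewrite inE Pk eqxx.
Qed.

Definition blk n (D : {set 'I_n}) i := count (fun k => (k.+1 < n) && ~~ nD D k) (iota 0 i).

Lemma blkS n (D : {set 'I_n}) i : blk D i.+1 = blk D i + ((i.+1 < n) && ~~ nD D i).
Proof. by rewrite /blk -[in LHS]addn1 iotaD count_cat /= addn0 add0n. Qed.

Lemma blk_split n (D : {set 'I_n}) i j : i <= j ->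
  blk D j = blk D i + count (fun k => (k.+1 < n) && ~~ nD D k) (iota i (j - i)).
Proof. by move=> ij; rewrite /blk -{1}(subnKC ij) iotaD count_cat add0n. Qed.

Lemma blk_mono n (D : {set 'I_n}) i j : i <= j -> blk D i <= blk D j.
Proof. by move=> ij; rewrite (blk_split D ij) leq_addr. Qed.

Lemma blk_eqP n (D : {set 'I_n}) i j : i <= j ->
  reflect (forall k, i <= k -> k < j -> k.+1 < n -> nD D k) (blk D i == blk D j).
Proof.
move=> ij; rewrite (blk_split D ij) -{1}[blk D i]addn0 eqn_add2l eq_sym -leqn0 leqNgt -has_count.
apply: (iffP hasPn) => H k.
- move=> ik kj kn; have := H k; rewrite mem_iota subnKC // ik kj kn /= => /(_ isT).
  by rewrite negbK.
- rewrite mem_iota subnKC // => /andP [ik kj]; apply/negP => /andP [kn /negP]; apply.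
  exact: H.
Qed.

Definition key1 n (D : {set 'I_n}) k := blk D k * n + (n - 1 - k).

Lemma key1_lt n (D : {set 'I_n}) i j : i < n -> j < n ->
  (key1 D i < key1 D j) = (blk D i < blk D j) || ((blk D i == blk D j) && (j < i)).
Proof.
move=> iN jN; rewrite /key1.
case: (ltngtP (blk D i) (blk D j)) => h /=.
- apply: (@leq_trans (blk D i * n + n)); first lia.
  apply: (@leq_trans (blk D j * n)); last exact: leq_addr.
  by rewrite addnC -mulSn leq_mul2r h orbT.
- apply/negbTE; rewrite -leqNgt.
  apply: (@leq_trans (blk D j * n + n)); first lia.
  apply: (@leq_trans (blk D i * n)); last exact: leq_addr.
  by rewrite addnC -mulSn leq_mul2r h orbT.
- rewrite h ltn_add2l; lia.
Qed.

Lemma key1_inj n (D : {set 'I_n}) i j : i < n -> j < n -> key1 D i = key1 D j -> i = j.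
Proof.
move=> iN jN e; have h1 := key1_lt D iN jN; have h2 := key1_lt D jN iN.
rewrite e ltnn in h1 h2.
case: (ltngtP i j) => // h; [move: h2|move: h1]; rewrite h andbT; lia.
Qed.

Lemma key1_injO n (D : {set 'I_n}) : forall i j : 'I_n, key1 D i = key1 D j -> i = j.
Proof. by move=> i j /(key1_inj (ltn_ord i) (ltn_ord j)) /val_inj. Qed.

Definition L n (D : {set 'I_n}) : 'S_n := rk (@key1_injO n D).

Lemma L_C1 n (D : {set 'I_n}) : avoids (L D) [:: 2; 3; 1] && avoids (L D) [:: 3; 1; 2].
Proof.
apply/andP; split.
- apply: mk231 => a b c ab bc cn; rewrite !v_rk; try lia.
  rewrite !key1_lt; try lia.
  have := blk_mono D (ltnW ab); have := blk_mono D (ltnW bc); lia.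
- apply: mk312 => a b c ab bc cn; rewrite !v_rk; try lia.
  rewrite !key1_lt; try lia.
  have := blk_mono D (ltnW ab); have := blk_mono D (ltnW bc); lia.
Qed.

Definition U0 n := [set i : 'I_n | i.+1 < n].
Definition Dset n (p : 'S_n) := [set i : 'I_n | is_des p i].
Definition Aset n (p : 'S_n) := [set i : 'I_n | is_asc p i].

Lemma is_desE n (p : 'S_n) k : is_des p k = (k.+1 < n) && (v p k.+1 < v p k).
Proof. by []. Qed.
Lemma is_ascE n (p : 'S_n) k : is_asc p k = (k.+1 < n) && (v p k < v p k.+1).
Proof. by []. Qed.

Lemma Dset_L n (D : {set 'I_n}) : D \subset U0 n -> Dset (L D) = D.
Proof.
move=> HD; apply/setP => i; rewrite inE is_desE.
case: (ltnP i.+1 n) => h /=.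
- rewrite /L v_rk // key1_lt // blkS h -(nDE D i) /=.
  case: (nD D i) => /=; lia.
- apply/esym/negbTE/negP => /(subsetP HD); rewrite inE; lia.
Qed.

Lemma chain n (p : 'S_n) i j : i < j -> j < n ->
  (forall k, i <= k -> k < j -> v p k.+1 < v p k) -> v p j < v p i.
Proof.
elim: j => [//|j IH] ij jn H.
case: (ltngtP i j) => h.
- apply: (@ltn_trans (v p j)); first exact: H.
  apply: IH => //; first lia.
  move=> k ik kj; apply: H => //; lia.
- lia.
- by rewrite -h; apply: H => //; rewrite h.
Qed.

Lemma C1_des n (p : 'S_n) : avoids p [:: 2; 3; 1] -> avoids p [:: 3; 1; 2] ->
  forall i j, i < j -> j < n -> v p j < v p i -> forall k, i <= k -> k < j -> v p k.+1 < v p k.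
Proof.
move=> A1 A2 i j ij jn hji k ik kj.
have kn : k.+1 < n by lia.
case: (ltngtP (v p k.+1) (v p k)) => // h; last first.
  by move/vinj: h; lia.
exfalso.
case: (ltngtP i k) => hik; last first; [|lia|].
- (* k = i *)
  subst k.
  case: (ltngtP i.+1 j) => h2; [|lia|].
  + exact: (av231 A1 (ltnSn i) h2 jn hji h).
  + by move: hji; rewrite -h2; lia.
- case: (ltngtP k.+1 j) => h2; [| lia |].
  + case: (ltngtP (v p k) (v p i)) => h3; last first.
    * by move/vinj: h3; lia.
    * exact: (av231 A1 hik (ltn_trans (ltnSn k) h2) jn hji h3).
    * case: (ltngtP (v p k.+1) (v p i)) => h4; last first.
      -- by move/vinj: h4; lia.
      -- exact: (av231 A1 (ltn_trans hik (ltnSn k)) h2 jn hji h4).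
      -- exact: (av312 A2 hik (ltnSn k) kn h h4).
  + subst j. exact: (av312 A2 hik (ltnSn k) jn h hji).
Qed.

Lemma C1_key n (p : 'S_n) : avoids p [:: 2; 3; 1] -> avoids p [:: 3; 1; 2] ->
  forall i j, i < j -> j < n -> (v p i < v p j) = (key1 (Dset p) i < key1 (Dset p) j).
Proof.
move=> A1 A2 i j ij jn.
rewrite key1_lt; try lia.
have -> : (blk (Dset p) i < blk (Dset p) j) || ((blk (Dset p) i == blk (Dset p) j) && (j < i))
   = ~~ (blk (Dset p) i == blk (Dset p) j) by have := blk_mono (Dset p) (ltnW ij); lia.
have E : (v p j < v p i) = (blk (Dset p) i == blk (Dset p) j).
  apply/idP/(blk_eqP _ (ltnW ij)).
  - move=> h k ik kj kn; rewrite nD_set is_desE kn /=.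
    by rewrite (ltn_trans (ltnSn k) kn) /=; exact: (C1_des A1 A2 ij jn h ik kj).
  - move=> H; apply: chain => // k ik kj.
    have := H k ik kj ltac:(lia); rewrite nD_set is_desE.
    by case/andP => _ /andP [_ ->].
rewrite -E; have := vneq p (_ : i < n) jn (_ : i != j).
move=> /(_ ltac:(lia) ltac:(lia)); case: ltngtP => //.
Qed.


Definition key2 n (A : {set 'I_n}) k := if nD A k then k else 2 * n - k.

Lemma key2_inj n (A : {set 'I_n}) i j : i < n -> j < n -> key2 A i = key2 A j -> i = j.
Proof. by rewrite /key2; case: (nD A i); case: (nD A j); lia. Qed.

Lemma key2_injO n (A : {set 'I_n}) : forall i j : 'I_n, key2 A i = key2 A j -> i = j.
Proof. by move=> i j /(key2_inj (ltn_ord i) (ltn_ord j)) /val_inj. Qed.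

Definition M n (A : {set 'I_n}) : 'S_n := rk (@key2_injO n A).

Lemma M_C2 n (A : {set 'I_n}) : avoids (M A) [:: 2; 1; 3] && avoids (M A) [:: 2; 3; 1].
Proof.
apply/andP; split.
- apply: mk213 => a b c ab bc cn; rewrite !v_rk; try lia.
  by rewrite /key2; case: (nD A a); case: (nD A b); case: (nD A c); lia.
- apply: mk231 => a b c ab bc cn; rewrite !v_rk; try lia.
  by rewrite /key2; case: (nD A a); case: (nD A b); case: (nD A c); lia.
Qed.

Lemma Aset_M n (A : {set 'I_n}) : A \subset U0 n -> Aset (M A) = A.
Proof.
move=> HA; apply/setP => i; rewrite inE is_ascE.
case: (ltnP i.+1 n) => h /=.
- rewrite /M v_rk // /key2 -(nDE A i).
  by case: (nD A i); case: (nD A i.+1); lia.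
- apply/esym/negbTE/negP => /(subsetP HA); rewrite inE; lia.
Qed.

Lemma C2_step n (p : 'S_n) : avoids p [:: 2; 1; 3] -> avoids p [:: 2; 3; 1] ->
  forall i j, i < j -> j < n -> (v p i < v p j) = (v p i < v p i.+1).
Proof.
move=> A1 A2 i j ij jn.
case: (ltngtP i.+1 j) => h; [|lia|by rewrite h].
have iN : i < n by lia.
have i1N : i.+1 < n by lia.
have ii : i != i.+1 by lia.
have ij' : i != j by lia.
have n1 := vneq p iN jn ij'.
have n2 := vneq p iN i1N ii.
case: (ltngtP (v p i) (v p i.+1)) => h2.
- apply/negP => /negP; rewrite -leqNgt => h3.
  have h4 : v p j < v p i by rewrite ltn_neqAle h3 eq_sym n1.
  exact: (av231 A2 (ltnSn i) h jn h4 h2).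
- apply/negP => h3.
  exact: (av213 A1 (ltnSn i) h jn h2 h3).
- by move/eqP: n2; rewrite h2.
Qed.

Lemma key2_lt n (A : {set 'I_n}) i j : i < j -> j < n -> (key2 A i < key2 A j) = nD A i.
Proof.
move=> ij jn; rewrite /key2; case: (nD A i); case: (nD A j).
- exact: ij.
- apply: (@leq_trans n); lia.
- apply/negbTE; rewrite -leqNgt; lia.
- apply/negbTE; rewrite -leqNgt; lia.
Qed.

Lemma C2_key n (p : 'S_n) : avoids p [:: 2; 1; 3] -> avoids p [:: 2; 3; 1] ->
  forall i j, i < j -> j < n -> (v p i < v p j) = (key2 (Aset p) i < key2 (Aset p) j).
Proof.
move=> A1 A2 i j ij jn.
have iN : i < n by lia.
have i1N : i.+1 < n by lia.
by rewrite (C2_step A1 A2 ij jn) key2_lt // nD_set is_ascE iN i1N.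
Qed.


Definition Uc n (S : {set 'I_n}) := [set i : 'I_n | (i.+1 < n) && (i \notin S)].
Definition sep n (I : {set 'I_n}) :=
  [forall i in I, forall j in I, (i != j) ==> ((i.+2 <= j)%N || (j.+2 <= i)%N)].
Definition mx n (S : {set 'I_n}) := \max_(I : {set 'I_n} | (I \subset S) && sep I) #|I|.
Definition G n (S : {set 'I_n}) := (#|Uc S|, #|S|, mx (Uc S), mx S).

Lemma asc_des_compl n (p : 'S_n) (i : 'I_n) :
  is_asc p i = (i.+1 < n) && ~~ is_des p i.
Proof.
rewrite is_ascE is_desE; case: (ltnP i.+1 n) => h //=.
have := vneq p (ltn_ord i) h (_ : (i : nat) != i.+1).
move=> /(_ ltac:(lia)); case: ltngtP => //.
Qed.

Lemma des_asc_compl n (p : 'S_n) (i : 'I_n) :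
  is_des p i = (i.+1 < n) && ~~ is_asc p i.
Proof.
rewrite asc_des_compl; case: (ltnP i.+1 n) => h //=; first by rewrite negbK.
by rewrite is_desE ltnNge h.
Qed.

Lemma Aset_Uc n (p : 'S_n) : Aset p = Uc (Dset p).
Proof. by apply/setP => i; rewrite !inE asc_des_compl. Qed.

Lemma Dset_Uc n (p : 'S_n) : Dset p = Uc (Aset p).
Proof. by apply/setP => i; rewrite !inE des_asc_compl. Qed.

Lemma asc_card n (p : 'S_n) : asc p = #|Aset p|.
Proof. by rewrite /Aset (card_iota n (is_asc p)). Qed.

Lemma des_card n (p : 'S_n) : des p = #|Dset p|.
Proof. by rewrite /Dset (card_iota n (is_des p)). Qed.

Lemma nonadj_mx n (P : nat -> bool) (I : {set 'I_n}) :
  nonadj_set P I = (I \subset [set i : 'I_n | P i]) && sep I.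
Proof.
rewrite /nonadj_set /sep; congr andb.
apply/forall_inP/subsetP => H i Hi; [rewrite inE|]; move: (H i Hi) => //.
by rewrite inE.
Qed.

Lemma MNA_mx n (p : 'S_n) : MNA p = mx (Aset p).
Proof. by rewrite /MNA /mx; apply: eq_bigl => I; rewrite nonadj_mx. Qed.

Lemma MND_mx n (p : 'S_n) : MND p = mx (Dset p).
Proof. by rewrite /MND /mx; apply: eq_bigl => I; rewrite nonadj_mx. Qed.

Lemma stat1 n (p : 'S_n) : (asc p, des p, MNA p, MND p) = G (Dset p).
Proof. by rewrite asc_card des_card MNA_mx MND_mx Aset_Uc. Qed.

Lemma stat2 n (p : 'S_n) : (des p, asc p, MND p, MNA p) = G (Aset p).
Proof. by rewrite asc_card des_card MNA_mx MND_mx Dset_Uc. Qed.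

Lemma bij_card n (C : pred 'S_n) (F : 'S_n -> {set 'I_n}) (Q : pred {set 'I_n}) :
  {in C &, injective F} -> (forall p, C p -> F p \subset U0 n) ->
  (forall D : {set 'I_n}, D \subset U0 n -> exists2 p, C p & F p = D) ->
  #|[set p | C p && Q (F p)]| = #|[set D : {set 'I_n} | (D \subset U0 n) && Q D]|.
Proof.
move=> Hinj HF Hs.
have -> : [set D : {set 'I_n} | (D \subset U0 n) && Q D] = F @: [set p | C p && Q (F p)].
  apply/setP => D; rewrite inE; apply/andP/imsetP.
  - move=> [HD HQ]; have [p Cp Ep] := Hs D HD.
    by exists p => //; rewrite inE Cp Ep HQ.
  - move=> [p]; rewrite inE => /andP [Cp HQ] ->; split => //; exact: HF.
rewrite card_in_imset // => p q; rewrite !inE => /andP [Cp _] /andP [Cq _].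
exact: Hinj.
Qed.

Lemma U0_Dset n (p : 'S_n) : Dset p \subset U0 n.
Proof. by apply/subsetP => i; rewrite !inE is_desE => /andP []. Qed.

Lemma U0_Aset n (p : 'S_n) : Aset p \subset U0 n.
Proof. by apply/subsetP => i; rewrite !inE is_ascE => /andP []. Qed.

Definition C1 n (p : 'S_n) := avoids p [:: 2; 3; 1] && avoids p [:: 3; 1; 2].
Definition C2 n (p : 'S_n) := avoids p [:: 2; 1; 3] && avoids p [:: 2; 3; 1].

Lemma C1_inj n : {in (@C1 n) &, injective (@Dset n)}.
Proof.
move=> p q /andP [P1 P2] /andP [Q1 Q2] E; apply: perm_cmp => i j.
rewrite -!vE.
rewrite (cmp_ext (key := key1 (Dset p)) _ (C1_key P1 P2)) ?ltn_ord //; last first.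
  by move=> ? ? ? ?; apply: key1_inj.
rewrite (cmp_ext (key := key1 (Dset q)) _ (C1_key Q1 Q2)) ?ltn_ord ?E //.
by move=> ? ? ? ?; apply: key1_inj.
Qed.

Lemma C2_inj n : {in (@C2 n) &, injective (@Aset n)}.
Proof.
move=> p q /andP [P1 P2] /andP [Q1 Q2] E; apply: perm_cmp => i j.
rewrite -!vE.
rewrite (cmp_ext (key := key2 (Aset p)) _ (C2_key P1 P2)) ?ltn_ord //; last first.
  by move=> ? ? ? ?; apply: key2_inj.
rewrite (cmp_ext (key := key2 (Aset q)) _ (C2_key Q1 Q2)) ?ltn_ord ?E //.
by move=> ? ? ? ?; apply: key2_inj.
Qed.

Theorem theorem15 (n a b c d : nat) :
  #|[set p : 'S_n | avoids p [:: 2; 3; 1] && avoids p [:: 3; 1; 2] &&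
       ((asc p, des p, MNA p, MND p) == (a, b, c, d))]| =
  #|[set s : 'S_n | avoids s [:: 2; 1; 3] && avoids s [:: 2; 3; 1] &&
       ((des s, asc s, MND s, MNA s) == (a, b, c, d))]|.
Proof.
pose Q := fun D : {set 'I_n} => G D == (a, b, c, d).
transitivity #|[set p | C1 p && Q (Dset p)]|.
  by apply: eq_card => p; rewrite !inE stat1.
transitivity #|[set s | C2 s && Q (Aset s)]|; last first.
  by apply: eq_card => p; rewrite !inE stat2.
rewrite (bij_card Q (@C1_inj n)); last first.
- by move=> D HD; exists (L D); [exact: L_C1 | exact: Dset_L].
- by move=> p _; exact: U0_Dset.
rewrite (bij_card Q (@C2_inj n)) //.
- by move=> p _; exact: U0_Aset.
- by move=> D HD; exists (M D); [exact: M_C2 | exact: Aset_M].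
Qed.
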